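(* Let $n\ge1$ and set $\xi_0=1$, $\xi_{n+1}=-1$, and $\xi_k=\cos\frac{(2k-1)\pi}{2n+1}$ for $1\le k\le n$. Then $1=\xi_0>\xi_1>\cdots>\xi_n>\xi_{n+1}=-1$, and for each $1\le k\le n$ the polynomial $S_{2n}(x)$ has exactly one zero in the open interval $(\xi_{k+1},\xi_k)$. These $n$ zeros together with $x=1$ are all the zeros of $S_{2n}(x)$, and all of them are simple.
   Context: $U_n(x)$ is the Chebyshev polynomial of the second kind ($U_n(\cos\theta)=\sin((n+1)\theta)/\sin\theta$), with $U_{-1}=0$. For $n\ge0$, $S_{2n}(x)=(2nx+x+2n-1)U_n(x)-(2nx+3x+2n+1)U_{n-1}(x)$, a polynomial of degree $n+1$. *)

(* Defs.v *)
From HB Require Import structures.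
From mathcomp Require Import all_boot all_order all_algebra.
From mathcomp Require Import all_classical all_reals all_analysis.
Set Implicit Arguments. Unset Strict Implicit. Unset Printing Implicit Defensive.
Import Order.TTheory GRing.Theory Num.Theory.
Local Open Scope ring_scope.

(* chebUpair n = (U_{n-1}, U_n), with U_{-1} = 0, U_0 = 1,
   U_{m+1} = 2 X U_m - U_{m-1}  (Chebyshev polynomials of the second kind). *)
Fixpoint chebUpair (R : ringType) (n : nat) : {poly R} * {poly R} :=
  match n with
  | 0 => (0, 1)
  | m.+1 => let: (a, b) := chebUpair R m in (b, 'X *+ 2 * b - a)
  end.

Definition chebU (R : ringType) (n : nat) : {poly R} := (chebUpair R n).2.
Definition chebUm1 (R : ringType) (n : nat) : {poly R} := (chebUpair R n).1.

Definition S2n (R : ringType) (n : nat) : {poly R} :=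
  ('X *+ (2 * n + 1) + ((2 * n)%:R - 1)%:P) * chebU R n
  - ('X *+ (2 * n + 3) + ((2 * n + 1)%:R)%:P) * chebUm1 R n.

Definition xi (R : realType) (n k : nat) : R :=
  if k == 0%N then 1
  else if k == n.+1 then -1
  else cos (((2 * k - 1)%:R * pi) / (2 * n + 1)%:R).

(* Main.v *)
Require Import Defs.
From HB Require Import structures.
From mathcomp Require Import all_boot all_order all_algebra.
From mathcomp Require Import all_classical all_reals all_analysis.
From mathcomp Require Import ring lra zify.
Import Order.TTheory GRing.Theory Num.Theory.
Local Open Scope ring_scope.

Section Cheb.
Variable R : realType.

Lemma chebU_S k : chebU R k.+1 = 'X *+ 2 * chebU R k - chebUm1 R k.
Proof. by rewrite /chebU /chebUm1 /=; case: chebUpair. Qed.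
Lemma chebUm1_S k : chebUm1 R k.+1 = chebU R k.
Proof. by rewrite /chebU /chebUm1 /=; case: chebUpair. Qed.
Lemma chebU_0 : chebU R 0 = 1. Proof. by []. Qed.
Lemma chebUm1_0 : chebUm1 R 0 = 0. Proof. by []. Qed.

Lemma size_mulrn_le (p : {poly R}) k : (size (p *+ k) <= size p)%N.
Proof.
elim: k => [|k IH]; first by rewrite mulr0n size_poly0.
by rewrite mulrS (leq_trans (size_polyD _ _)) // geq_max leqnn IH.
Qed.

Lemma cheb_size k : (size (chebUm1 R k) <= k)%N /\ (size (chebU R k) <= k.+1)%N.
Proof.
elim: k => [|k [IH1 IH2]]; first by rewrite chebUm1_0 chebU_0 size_poly0 size_poly1.
rewrite chebUm1_S chebU_S; split => //.
rewrite (leq_trans (size_polyD _ _)) // geq_max size_polyN; apply/andP; split; last first.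
  by apply: (leq_trans IH1); rewrite ltnW.
rewrite (leq_trans (size_polyMleq _ _)) //.
have h : (size ('X *+ 2 : {poly R}) <= 2)%N by rewrite (leq_trans (size_mulrn_le _ _)) // size_polyX.
move: h IH2; set a := size _; set b := size _; lia.
Qed.

Lemma cheb_N1 k : (chebU R k).[-1] = (-1) ^+ k * k.+1%:R /\
                  (chebUm1 R k).[-1] = - ((-1) ^+ k * k%:R).
Proof.
elim: k => [|k [IH1 IH2]]; first by rewrite chebU_0 chebUm1_0 !hornerE /=; split; ring.
rewrite chebU_S chebUm1_S !hornerE IH1 IH2 exprS !mulrSr; split; ring.
Qed.

Lemma cheb_1 k : (chebU R k).[1] = k.+1%:R /\ (chebUm1 R k).[1] = k%:R.
Proof.
elim: k => [|k [IH1 IH2]]; first by rewrite chebU_0 chebUm1_0 !hornerE.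
rewrite chebU_S chebUm1_S !hornerE IH1 IH2 !mulrSr; split; ring.
Qed.

Lemma cheb_trig k (t : R) : (chebU R k).[cos t] * sin t = sin (k.+1%:R * t) /\
                  (chebUm1 R k).[cos t] * sin t = sin (k%:R * t).
Proof.
elim: k => [|k [IH1 IH2]]; first by rewrite chebU_0 chebUm1_0 !hornerE sin0.
rewrite chebU_S chebUm1_S !hornerE; split => //.
have e1 : k.+2%:R * t = k.+1%:R * t + t by rewrite (mulrSr _ k.+1); ring.
have e2 : k%:R * t = k.+1%:R * t - t by rewrite (mulrSr _ k); ring.
transitivity ((cos t *+ 2) * ((chebU R k).[cos t] * sin t) - ((chebUm1 R k).[cos t] * sin t)); first ring.
rewrite IH1 IH2 e1 e2 !sinD cosN sinN; ring.
Qed.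
End Cheb.

Section Main.
Variable R : realType.
Variable n : nat.
Hypothesis hn : (1 <= n)%N.

Definition th (k : nat) : R := ((2 * k - 1)%:R * pi) / (2 * n + 1)%:R.

Lemma m_gt0 : 0 < (2 * n + 1)%:R :> R.
Proof. by rewrite ltr0n addn1. Qed.

Lemma xiE k : (1 <= k <= n)%N -> xi R n k = cos (th k).
Proof.
move=> /andP[k1 kn]; rewrite /xi /th.
have -> : (k == 0%N) = false by apply/negbTE; rewrite -lt0n.
by have -> : (k == n.+1) = false by apply/negbTE; rewrite neq_ltn ltnS kn.
Qed.

Lemma th_pos k : (1 <= k <= n)%N -> 0 < th k < pi.
Proof.
move=> /andP[k1 kn]; rewrite /th; apply/andP; split.
  rewrite divr_gt0 ?m_gt0 // mulr_gt0 ?pi_gt0 // ltr0n.  lia.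
rewrite ltr_pdivrMr ?m_gt0 // mulrC ltr_pM2l ?pi_gt0 // ltr_nat; lia.
Qed.

Lemma th_lt k : (1 <= k)%N -> th k < th k.+1.
Proof.
move=> k1; rewrite /th ltr_pM2r ?invr_gt0 ?m_gt0 // ltr_pM2r ?pi_gt0 // ltr_nat; lia.
Qed.

Lemma S_horner x : (S2n R n).[x] =
  (x *+ (2 * n + 1) + ((2 * n)%:R - 1)) * (chebU R n).[x]
  - (x *+ (2 * n + 3) + (2 * n + 1)%:R) * (chebUm1 R n).[x].
Proof. rewrite /S2n !(hornerD, hornerN, hornerM, hornerMn, hornerX, hornerC); ring. Qed.

Lemma sign_sq k : ((-1) ^+ k) ^+ 2 = 1 :> R.
Proof. by rewrite -exprM mulnC exprM sqrrN !expr1n. Qed.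

Lemma S_sign k : (1 <= k <= n)%N -> 0 < (-1) ^+ k * (S2n R n).[xi R n k].
Proof.
move=> hk; rewrite xiE //.
have /andP[t0 tpi] := th_pos _ hk.
have st : 0 < sin (th k) by apply: sin_gt0_pi; rewrite t0 tpi.
have cb : 0 < cos (th k / 2).
  apply: cos_gt0_pihalf; apply/andP; split.
    by rewrite (lt_trans _ (divr_gt0 t0 _)) // oppr_lt0 divr_gt0 ?pi_gt0.
  by rewrite ltr_pM2r ?invr_gt0.
have c1 : -1 < cos (th k).
  rewrite -cospi ltr_cos // in_itv /= ?lexx ?pi_ge0 ?(ltW t0) ?(ltW tpi) //.
rewrite -(pmulr_lgt0 _ st) S_horner.
have [e1 e2] := cheb_trig R n (th k).
set c := cos (th k).
have -> : (-1) ^+ k * ((c *+ (2 * n + 1) + ((2 * n)%:R - 1)) * (chebU R n).[c]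
  - (c *+ (2 * n + 3) + (2 * n + 1)%:R) * (chebUm1 R n).[c]) * sin (th k) =
  (-1) ^+ k * ((c *+ (2 * n + 1) + ((2 * n)%:R - 1)) * ((chebU R n).[c] * sin (th k))
  - (c *+ (2 * n + 3) + (2 * n + 1)%:R) * ((chebUm1 R n).[c] * sin (th k))) by ring.
rewrite e1 e2.
have E1 : n.+1%:R * th k = (th k / 2 - pi / 2) + pi *+ k.
  case: k {e1 e2 t0 tpi st cb c1 c} hk => [//|j] hk.
  rewrite /th -[pi *+ _]mulr_natr.
  have -> : (2 * j.+1 - 1 = 2 * j + 1)%N by lia.
  have hS : forall a : nat, a.+1%:R = a%:R + 1 :> R by move=> a; rewrite -addn1 natrD.
  rewrite !hS !natrD ?natrM.
  by field; rewrite -!natrD natr1 pnatr_eq0.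
have E2 : n%:R * th k = - (th k / 2 + pi / 2) + pi *+ k.
  case: k {E1 e1 e2 t0 tpi st cb c1 c} hk => [//|j] hk.
  rewrite /th -[pi *+ _]mulr_natr.
  have -> : (2 * j.+1 - 1 = 2 * j + 1)%N by lia.
  have hS : forall a : nat, a.+1%:R = a%:R + 1 :> R by move=> a; rewrite -addn1 natrD.
  rewrite !hS !natrD ?natrM.
  by field; rewrite -!natrD natr1 pnatr_eq0.
rewrite E1 E2 !(alternatingn (@sinDpi R)) sinBpihalf sinN sinDpihalf.
set s := (-1) ^+ k; set cc := cos (th k / 2).
have -> : s * ((c *+ (2 * n + 1) + ((2 * n)%:R - 1)) * (s * - cc) -
   (c *+ (2 * n + 3) + (2 * n + 1)%:R) * (s * - (cc))) = s ^+ 2 * (cc * (2 * (1 + c))) by ring.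
rewrite /s sign_sq mul1r mulr_gt0 //. move: c1; rewrite -/c. clearbody c. lra.
Qed.

Lemma xi_N1 : xi R n n.+1 = -1.
Proof. by rewrite /xi eqxx. Qed.

Lemma S_sign' k : (1 <= k <= n.+1)%N -> 0 < (-1) ^+ k * (S2n R n).[xi R n k].
Proof.
move=> /andP[k1]; rewrite leq_eqVlt => /orP[/eqP ->|]; last first.
  by rewrite ltnS => kn; apply: S_sign; rewrite k1 kn.
rewrite xi_N1 S_horner.
have [e1 e2] := cheb_N1 R n.
rewrite e1 e2 !mulNrn exprS.
set s := (-1) ^+ n.
have hS : forall a : nat, a.+1%:R = a%:R + 1 :> R by move=> a; rewrite -addn1 natrD.
rewrite !hS !natrD ?natrM.
have -> : -1 * s *
  ((- (n%:R + (n%:R + 0) + 1) + (n%:R + (n%:R + 0) - 1)) * (s * (n%:R + 1)) -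
   (- (n%:R + (n%:R + 0) + 3) + (n%:R + (n%:R + 0) + 1)) * - (s * n%:R)) =
   s ^+ 2 * (2 * (2 * n%:R + 1)) :> R by ring.
rewrite /s sign_sq mul1r; have : 0 <= n%:R :> R := ler0n _ _; lra.
Qed.
Lemma cos_lt (a b : R) : 0 <= a -> a < b -> b <= pi -> cos b < cos a.
Proof.
move=> a0 ab bpi; rewrite ltr_cos // in_itv /=; apply/andP; split => //.
- by apply: (le_trans (ltW ab)).
- by apply: (le_trans a0); apply: ltW.
Qed.

Lemma xi_lt k : (k <= n)%N -> xi R n k.+1 < xi R n k.
Proof.
case: k => [_|k kn].
  have h1 : (1 <= 1 <= n)%N by rewrite leqnn hn.
  rewrite xiE // /xi /= -cos0; have /andP[t0 tpi] := th_pos _ h1.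
  by apply: cos_lt => //; apply: ltW.
have h1 : (1 <= k.+1 <= n)%N by rewrite kn.
have /andP[t0 tpi] := th_pos _ h1.
rewrite (xiE _ h1); move: kn; rewrite leq_eqVlt => /orP[/eqP ek|kn].
  rewrite ek xi_N1 -cospi -ek; by apply: cos_lt => //; apply: ltW.
have h2 : (1 <= k.+2 <= n)%N by rewrite kn.
have /andP[t2 tpi2] := th_pos _ h2.
rewrite (xiE _ h2); apply: cos_lt; [exact: ltW| exact: th_lt | exact: ltW].
Qed.

Lemma xi_ltij i j : (i < j <= n.+1)%N -> xi R n j < xi R n i.
Proof.
elim: j => [//|j IH] /andP[ij jn].
have xl := xi_lt j jn.
move: ij; rewrite ltnS leq_eqVlt => /orP[/eqP ->//|ij].
by apply: (lt_trans xl); apply: IH; rewrite ij ltnW.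
Qed.

Lemma xi_le i j : (i <= j <= n.+1)%N -> xi R n j <= xi R n i.
Proof.
move=> /andP[]; rewrite leq_eqVlt => /orP[/eqP ->//|ij] jn.
by apply: ltW; apply: xi_ltij; rewrite ij.
Qed.

Lemma root_in k : (1 <= k <= n)%N ->
  exists x, xi R n k.+1 < x < xi R n k /\ root (S2n R n) x.
Proof.
move=> /andP[k1 kn].
set a := xi R n k.+1; set b := xi R n k.
have ab : a < b by apply: xi_lt.
have hb : 0 < (-1) ^+ k * (S2n R n).[b] by apply: S_sign'; lia.
have ha : 0 < (-1) ^+ k.+1 * (S2n R n).[a] by apply: S_sign'; lia.
set p := ((-1) ^+ k : R) *: S2n R n.
have pa : p.[a] < 0 by rewrite hornerZ; move: ha; rewrite exprS mulN1r mulNr oppr_gt0.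
have pb : 0 < p.[b] by rewrite hornerZ.
have hab : p.[a] <= 0 <= p.[b] by rewrite (ltW pa) (ltW pb).
have [x /andP[ax xb] rx] := @poly_ivt R p a b (ltW ab) hab.
have px : p.[x] = 0 by apply/eqP.
exists x; split; last first.
  by move: px; rewrite /root hornerZ => /eqP; rewrite mulf_eq0 signr_eq0.
apply/andP; split; rewrite lt_neqAle ?ax ?xb andbT; apply/eqP => e.
  by move: pa; rewrite e px ltxx.
by move: pb; rewrite -e px ltxx.
Qed.

Lemma root1 : root (S2n R n) 1.
Proof.
rewrite /root S_horner; have [e1 e2] := cheb_1 R n; rewrite e1 e2.
have hS : forall a : nat, a.+1%:R = a%:R + 1 :> R by move=> a; rewrite -addn1 natrD.
rewrite !hS !natrD ?natrM; apply/eqP; ring.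
Qed.

Lemma S_neq0 : S2n R n != 0.
Proof.
apply/eqP => e; have := S_sign' n.+1; rewrite e horner0 mulr0 ltxx leqnn /=.
by move=> /(_ isT).
Qed.

Lemma size_S : (size (S2n R n) <= n.+2)%N.
Proof.
have [h1 h2] := cheb_size R n.
have hA : forall (a : nat) (c : R), (size (('X *+ a + c%:P)%R : {poly R}) <= 2)%N.
  move=> a c; rewrite (leq_trans (size_polyD _ _)) // geq_max.
  by rewrite (leq_trans (size_mulrn_le _ _ _)) ?size_polyX // (leq_trans (size_polyC_leq1 _)).
rewrite /S2n (leq_trans (size_polyD _ _)) // geq_max size_polyN.
rewrite !(leq_trans (size_polyMleq _ _)) //.
  apply: (@leq_trans (2 + n.+1).-1) => //.
  by rewrite -!subn1 leq_sub2r // leq_add // hA.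
apply: (@leq_trans (2 + n).-1) => //.
by rewrite -!subn1 leq_sub2r // leq_add // hA.
Qed.

Lemma main_aux :
  (xi R n 0 = 1 /\ xi R n n.+1 = -1 /\
   forall k : nat, (k <= n)%N -> xi R n k.+1 < xi R n k) /\
  (forall k : nat, (1 <= k <= n)%N ->
     exists x : R, [/\ xi R n k.+1 < x < xi R n k, root (S2n R n) x &
       forall y : R, xi R n k.+1 < y < xi R n k -> root (S2n R n) y -> y = x]) /\
  root (S2n R n) 1 /\
  (forall x : R, root (S2n R n) x ->
     x = 1 \/ exists2 k : nat, (1 <= k <= n)%N & xi R n k.+1 < x < xi R n k) /\
  (S2n R n != 0 /\
   forall x : R, root (S2n R n) x -> ~~ root (S2n R n)^`() x).
Proof.
have hex : forall k : nat, exists x : R, (1 <= k <= n)%N ->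
    xi R n k.+1 < x < xi R n k /\ root (S2n R n) x.
  move=> k; case: (boolP (1 <= k <= n)%N) => hk.
    by have [x hx] := root_in _ hk; exists x.
  by exists 0.
have [r hr] := choice hex.
pose rr k := if k == 0%N then 1 else r k.
have rr_lt : forall k, (k < n)%N -> rr k.+1 < rr k.
  move=> k kn.
  have h1 : (1 <= k.+1 <= n)%N by rewrite kn.
  have [/andP[a1 a2] _] := hr _ h1.
  case: (eqVneq k 0%N) => [ek|k0]; rewrite /rr /=.
    rewrite ek in a2 *; apply: (lt_trans a2).
    by rewrite -[1](_ : xi R n 0 = 1) //; apply: xi_lt.
  have h2 : (1 <= k <= n)%N by rewrite lt0n k0 ltnW.
  by rewrite (negbTE k0); have [/andP[b1 b2] _] := hr _ h2; apply: lt_trans b1.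
have rr_ltij : forall i j, (i < j <= n)%N -> rr j < rr i.
  move=> i; elim=> [//|j IH] /andP[ij jn].
  have xl := rr_lt j jn.
  move: ij; rewrite ltnS leq_eqVlt => /orP[/eqP ->//|ij].
  by apply: (lt_trans xl); apply: IH; rewrite ij ltnW.
set s := map rr (iota 0 n.+1).
have s_uniq : uniq s.
  rewrite map_inj_in_uniq ?iota_uniq // => i j; rewrite !mem_iota /= !add0n => hi hj e.
  case: (ltngtP i j) => // h.
    by have := rr_ltij i j; rewrite h -ltnS hj e ltxx => /(_ isT).
  by have := rr_ltij j i; rewrite h -ltnS hi e ltxx => /(_ isT).
have s_root : all (root (S2n R n)) s.
  apply/allP => x /mapP[k]; rewrite mem_iota add0n /= => hk ->; rewrite /rr.
  case: (eqVneq k 0%N) => [_|k0]; first exact: root1.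
  by have [] := hr k; rewrite // lt0n k0 -ltnS.
have s_size : size s = n.+1 by rewrite size_map size_iota.
have memE : forall x, x \in s -> x = 1 \/ exists2 k, (1 <= k <= n)%N & x = r k.
  move=> x /mapP[k]; rewrite mem_iota add0n /= => hk ->; rewrite /rr.
  case: (eqVneq k 0%N) => [_|k0]; first by left.
  by right; exists k => //; rewrite lt0n k0 -ltnS.
clearbody s.
have allin : forall x, root (S2n R n) x -> x \in s.
  move=> x rx; apply/contraT => xs.
  have := @max_poly_roots _ (S2n R n) (x :: s) S_neq0.
  rewrite /= rx s_root xs s_uniq s_size => /(_ isT isT) h.
  by have := size_S; rewrite leqNgt h.
have xi_le1 : forall k, (1 <= k)%N -> (k <= n.+1)%N -> xi R n k < 1.
  by move=> k k1 kn; rewrite -[1](_ : xi R n 0 = 1) //; apply: xi_ltij; rewrite k1.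
split.
  split; first by []; split; first exact: xi_N1.
  exact: xi_lt.
split.
  move=> k hk; have [hx rx] := hr k hk; exists (r k); split => // y hy ry.
  have /andP[y1 y2] := hy.
  case: (memE y (allin y ry)) => [ey|[j hj ey]].
    have := xi_le1 k; rewrite ey in y2.
    move: hk => /andP[k1 kn]; rewrite k1 ltnW // => /(_ isT isT) h.
    by move: (lt_trans y2 h); rewrite ltxx.
  have [/andP[j1 j2] _] := hr j hj.
  move: hj hk => /andP[hj1 hj2] /andP[hk1 hk2].
  case: (ltngtP j k) => hjk.
  - have := xi_le j.+1 k; rewrite hjk ltnW //= => /(_ isT) h.
    rewrite -ey in j1; move: (lt_le_trans y2 h) => h'.
    by move: (lt_trans h' j1); rewrite ltxx.
  - have := xi_le k.+1 j; rewrite hjk ltnW //= => /(_ isT) h.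
    rewrite -ey in j2; move: (lt_le_trans j2 h) => h'.
    by move: (lt_trans h' y1); rewrite ltxx.
  - by rewrite ey hjk.
split; first exact: root1.
split.
  move=> x rx; case: (memE x (allin x rx)) => [->|[k hk ->]]; first by left.
  by right; exists k => //; have [] := hr k hk.
split; first exact: S_neq0.
move=> x rx; apply/negP => rdx.
have /factor_theorem [q hq] := rx.
have q0 : q != 0.
  by apply/eqP => q0; move: S_neq0; rewrite hq q0 mul0r eqxx.
have szq : size (S2n R n) = (size q).+1.
  by rewrite hq size_Mmonic ?monicXsubC // size_XsubC addn2.
have rqx : root q x.
  move: rdx; rewrite hq derivM derivXsubC mulr1 /root hornerD hornerM hornerXsubC subrr mulr0 add0r.
  by [].
have : all (root q) s.
  apply/allP => y ys; have := s_root; move/allP => /(_ y ys).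
  rewrite hq rootM root_XsubC; case: (eqVneq y x) => [->//|_]; by rewrite orbF.
move=> /(max_poly_roots q0) /(_ s_uniq); rewrite s_size => h.
by have := size_S; rewrite szq ltnS leqNgt h.
Qed.
End Main.

Theorem mainTheorem13 (R : realType) (n : nat) (hn : (1 <= n)%N) :
  (xi R n 0 = 1 /\ xi R n n.+1 = -1 /\
   forall k : nat, (k <= n)%N -> xi R n k.+1 < xi R n k) /\
  (forall k : nat, (1 <= k <= n)%N ->
     exists x : R, [/\ xi R n k.+1 < x < xi R n k, root (S2n R n) x &
       forall y : R, xi R n k.+1 < y < xi R n k -> root (S2n R n) y -> y = x]) /\
  root (S2n R n) 1 /\
  (forall x : R, root (S2n R n) x ->
     x = 1 \/ exists2 k : nat, (1 <= k <= n)%N & xi R n k.+1 < x < xi R n k) /\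
  (S2n R n != 0 /\
   forall x : R, root (S2n R n) x -> ~~ root (S2n R n)^`() x).
Proof. exact: main_aux. Qed.
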